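(* The problem $\textsc{Corresponding Order}$ belongs to $\mathsf{dMAM}[\log N]$. That is, there is a three-interaction distributed interactive protocol (Merlin, then Arthur, then Merlin, followed by one deterministic verification round) using certificates and messages of $\mathcal{O}(\log N)$ bits such that, on every connected network configuration $\langle G=(V,E),\mathrm{id},(x,\pi)\rangle$ with $|V|=n$: if (i) $\pi$ is a bijection from $V$ to $\{0,\dots,n-1\}$, (ii) $x$ is an injective function from $V$ to $\{0,\dots,N-1\}$ with $N\ge n$, and (iii) for all $u,v\in V$, $\pi(u)\ge\pi(v)\iff x(u)\ge x(v)$, then some prover makes all nodes accept with probability at least $2/3$; and if any of (i)–(iii) fails, then for every prover at least one node rejects with probability at least $2/3$.
   Context: Distributed setting: $G=(V,E)$ is a simple connected $n$-node graph; each node $v$ has a unique identifier $\mathrm{id}(v)\in\{1,\dots,\mathrm{poly}(n)\}$ and an input label; nodes know only a polynomial upper bound on $n$, not $n$ itself. In the input to $\textsc{Corresponding Order}$, each node $v$ receives the values $x(v)$ and $\pi(v)$. A $\mathsf{dMAM}[f(n)]$ protocol works as follows: an untrusted, computationally unbounded prover (Merlin) who knows the whole configuration gives each node $v$ a certificate $c_0(v)$; then a public random string $r$ (shared by all nodes and seen by Merlin) is drawn; then Merlin gives each node a second certificate $c_1(v)$ (depending on $r$); finally, in one deterministic round, each node sends one message to each neighbor (depending on its id, input, $r$ and its certificates) and then accepts or rejects based on all its information. All certificates and messages have $\mathcal{O}(f(n))$ bits (here $\mathcal{O}(\log N)$). Completeness: on yes-instances, some prover makes all nodes accept with probability $\ge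 2/3$. Soundness: on no-instances, for every prover, some node rejects with probability $\ge 2/3$. *)

(* Defs.v *)
From mathcomp Require Import all_boot.
Set Implicit Arguments. Unset Strict Implicit. Unset Printing Implicit Defensive.

Definition bits := seq bool.

(* Everything a node computes may depend on the global
   parameter N (known to all nodes), its own identifier, its input
   (x(v), pi(v)), the public random string r and its two certificates.
   - rand_len N : length of the public random string r (uniform in {0,1}^L);
   - send N id x pi r c0 c1 : the message the node sends to its neighbours;
   - decide N id x pi r c0 c1 ms : the accept (true) / reject decision, where
     ms is the list of messages received from the neighbours. *)
Record dMAM_protocol := DMAM {
  rand_len : nat -> nat;
  send : nat -> nat -> nat -> nat -> bits -> bits -> bits -> bits;
  decide : nat -> nat -> nat -> nat -> bits -> bits -> bits -> seq bits -> bool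
}.

(* O(log N) bits: at most c * (floor(log2 N) + 1) bits. *)
Definition size_bound (c N : nat) : nat := c * (trunc_log 2 N).+1.

Definition messages_bounded (P : dMAM_protocol) (c : nat) : Prop :=
  forall N i a b (r c0 c1 : bits),
    size r = rand_len P N -> size c0 <= size_bound c N -> size c1 <= size_bound c N ->
    size (send P N i a b r c0 c1) <= size_bound c N.

Definition network (V : finType) (e : rel V) (id : V -> nat) (k : nat) : Prop :=
  [/\ symmetric e, irreflexive e, 0 < #|V| & forall u v, connect e u v] /\
  (injective id /\ forall v, 1 <= id v <= #|V| ^ k).

Definition corresponding_order (V : finType) (N : nat) (x pi : V -> nat) : Prop :=
  [/\
      [/\ forall v, pi v < #|V|, injective pi & forall i, i < #|V| -> exists v, pi v = i],
      [/\ #|V| <= N, forall v, x v < N & injective x]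
    &
      forall u v, pi v <= pi u <-> x v <= x u].

Definition all_accept (P : dMAM_protocol) (N : nat) (V : finType) (e : rel V)
    (id x pi : V -> nat) (c0 : V -> bits) (r : bits) (c1 : V -> bits) : bool :=
  [forall v, decide P N (id v) (x v) (pi v) r (c0 v) (c1 v)
     [seq send P N (id u) (x u) (pi u) r (c0 u) (c1 u) | u <- enum V & e v u]].

(* A prover: first certificate c0, then (after seeing r) second certificate c1,
   both of at most size_bound c N bits. *)
Definition prover_bounded (P : dMAM_protocol) (c N : nat) (V : finType)
    (c0 : V -> bits) (c1 : (rand_len P N).-tuple bool -> V -> bits) : Prop :=
  (forall v, size (c0 v) <= size_bound c N) /\
  (forall r v, size (c1 r v) <= size_bound c N).

Definition n_accept (P : dMAM_protocol) (N : nat) (V : finType) (e : rel V)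
    (id x pi : V -> nat) (c0 : V -> bits) (c1 : (rand_len P N).-tuple bool -> V -> bits) : nat :=
  #|[set r : (rand_len P N).-tuple bool | all_accept P N e id x pi c0 (val r) (c1 r)]|.

Definition n_reject (P : dMAM_protocol) (N : nat) (V : finType) (e : rel V)
    (id x pi : V -> nat) (c0 : V -> bits) (c1 : (rand_len P N).-tuple bool -> V -> bits) : nat :=
  #|[set r : (rand_len P N).-tuple bool | ~~ all_accept P N e id x pi c0 (val r) (c1 r)]|.

Arguments prover_bounded P c N {V} c0 c1.
Arguments n_accept P N {V} e id x pi c0 c1.
Arguments n_reject P N {V} e id x pi c0 c1.
Arguments all_accept P N {V} e id x pi c0 r c1.
Arguments network {V} e id k.
Arguments corresponding_order {V} N x pi.

(* Main.v *)
Require Import Defs.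
From mathcomp Require Import all_boot.
From mathcomp Require Import zify.
Set Implicit Arguments. Unset Strict Implicit. Unset Printing Implicit Defensive.

Fixpoint nat2bits (w m : nat) : seq bool :=
  if w is w'.+1 then odd m :: nat2bits w' m./2 else [::].
Definition bits2nat (s : seq bool) : nat := foldr (fun (b : bool) (acc : nat) => nat_of_bool b + acc.*2) 0 s.

Lemma size_nat2bits w m : size (nat2bits w m) = w.
Proof. by elim: w m => //= w IH m; rewrite IH. Qed.

Lemma nat2bitsK w m : m < 2 ^ w -> bits2nat (nat2bits w m) = m.
Proof.
elim: w m => [|w IH] m /=; first by case: m.
move=> hm; rewrite IH; first by rewrite -[RHS](odd_double_half m).
rewrite expnS in hm. rewrite -ltn_double -!muln2. 
have := odd_double_half m; rewrite -muln2 => H.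
rewrite mulnC; lia.
Qed.

Definition enc (w : nat) (l : seq nat) : seq bool := flatten (map (nat2bits w) l).
Definition fld (w : nat) (s : seq bool) (j : nat) : nat := bits2nat (take w (drop (j * w) s)).

Lemma size_enc w l : size (enc w l) = size l * w.
Proof. elim: l => //= a l IH; by rewrite /enc /= size_cat size_nat2bits -/(enc w l) IH. Qed.

Lemma fld_enc w l j : all (fun a => a < 2 ^ w) l -> j < size l -> fld w (enc w l) j = nth 0 l j.
Proof.
elim: l j => //= a l IH [|j] /andP[ha hl] hj.
  by rewrite /fld /enc /= mul0n drop0 take_size_cat ?size_nat2bits // nat2bitsK.
rewrite /fld /enc /= mulSn drop_cat size_nat2bits ltnNge leq_addr /= addKn.
exact: IH.
Qed.

Lemma fld_cat w s1 s2 j : j.+1 * w <= size s1 -> fld w (s1 ++ s2) j = fld w s1 j.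
Proof.
move=> h; rewrite /fld drop_cat.
case: ltnP => h2.
  rewrite take_cat size_drop.
  case: ltnP => // h3.
  have e1 : size (drop (j * w) s1) = w by rewrite size_drop in h3 *; rewrite mulSn in h; lia.
  rewrite size_drop in e1; rewrite e1 subnn take0 cats0 take_oversize // size_drop e1 //.
have -> : w = 0 by move: h h2; rewrite mulSn; lia.

by rewrite !take0.
Qed.
Definition Hf (s : seq bool) (u : nat) : nat :=
  (nat_of_bool (nth false s (2 * u))).*2 + nat_of_bool (nth false s (2 * u).+1).
Definition hv (s : seq bool) (o : option nat) : nat := if o is Some u then Hf s u else 0.

Lemma cancel_lin (cA cB h h' RA RB : nat) : cA * h + RA = cB * h + RB -> cA * h' + RA = cB * h' + RB -> h != h' -> cA = cB.
Proof.
move=> e1 e2 hn.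
have e3 : (cA * h + cB * h' = cB * h + cA * h') by lia.
case: (ltngtP cA cB) => // hl; case: (ltngtP h h') hn => // hh _.
- have := ltn_mul hl hh. nia.
- have := ltn_mul hl hh. nia.
- have := ltn_mul hl hh. nia.
- have := ltn_mul hl hh. nia.
Qed.

Section FP.
Variables (L u0 : nat) (hL : (2 * u0).+1 < L).

Definition fseq (b : bool * bool) (r : seq bool) : seq bool :=
  mkseq (fun i => nth false r i (+) ((i == 2 * u0) && b.1) (+) ((i == (2 * u0).+1) && b.2)) L.

Lemma size_fseq b (r : L.-tuple bool) : size (fseq b r) == L.
Proof. by rewrite size_mkseq. Qed.

Definition flip b (r : L.-tuple bool) : L.-tuple bool := Tuple (size_fseq b r).

Lemma nth_flip b (r : L.-tuple bool) i :
  nth false (flip b r) i = nth false r i (+) ((i == 2 * u0) && b.1) (+) ((i == (2 * u0).+1) && b.2).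
Proof.
rewrite /= /fseq. case: (ltnP i L) => hi; first by rewrite nth_mkseq.
rewrite !nth_default ?size_mkseq ?size_tuple //.
have -> : (i == 2 * u0) = false by apply/negbTE; lia.
by have -> : (i == (2 * u0).+1) = false by apply/negbTE; lia.
Qed.

Lemma Hf_eq (r r' : seq bool) u :
  (forall i, i != 2 * u0 -> i != (2 * u0).+1 -> nth false r i = nth false r' i) ->
  u != u0 -> Hf r u = Hf r' u.
Proof.
move=> h hu; rewrite /Hf (h (2 * u)) ?(h (2 * u).+1) //.
- apply/negP => /eqP E; move/negP: hu; apply; apply/eqP; lia.
- apply/negP => /eqP E; lia.
- apply/negP => /eqP E; lia.
- apply/negP => /eqP E; move/negP: hu; apply; apply/eqP; lia.
Qed.

Variables (V : finType) (fa fb : V -> option nat).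

Definition bad := [set r : L.-tuple bool | \sum_v hv r (fa v) == \sum_v hv r (fb v)].

Lemma sum_split (f : V -> option nat) (r r' : seq bool) :
  (forall i, i != 2 * u0 -> i != (2 * u0).+1 -> nth false r i = nth false r' i) ->
  exists R, \sum_v hv r (f v) = #|[pred v | f v == Some u0]| * Hf r u0 + R /\
            \sum_v hv r' (f v) = #|[pred v | f v == Some u0]| * Hf r' u0 + R.
Proof.
move=> h.
have E : forall s, \sum_v hv s (f v) = #|[pred v | f v == Some u0]| * Hf s u0 + \sum_(v | f v != Some u0) hv s (f v).
  move=> s; rewrite (bigID (fun v => f v == Some u0)) /=; congr (_ + _).
  rewrite (eq_bigr (fun _ => Hf s u0)); last by move=> v /eqP Ev; rewrite Ev.
  by rewrite sum_nat_const.
exists (\sum_(v | f v != Some u0) hv r (f v)).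
rewrite !E; split => //; congr (_ + _).
apply: eq_bigr => v hv'; case E2: (f v) => [u|] //=.
apply: Hf_eq => //; first by move=> i h1 h2; rewrite h.
by apply: contra hv' => /eqP Eu; rewrite E2 Eu.
Qed.

Hypothesis hc : #|[pred v | fa v == Some u0]| != #|[pred v | fb v == Some u0]|.

Lemma key (r r' : L.-tuple bool) : r \in bad -> r' \in bad ->
  (forall i, i != 2 * u0 -> i != (2 * u0).+1 -> nth false r i = nth false r' i) ->
  Hf r u0 = Hf r' u0.
Proof.
rewrite !inE => /eqP e1 /eqP e2 h.
have [RA [ha1 ha2]] := sum_split fa h.
have [RB [hb1 hb2]] := sum_split fb h.
move: hc; rewrite ha1 hb1 in e1; rewrite ha2 hb2 in e2.
move: e1 e2; set cA := #|_|; set cB := #|_|.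
move=> e1 e2 hne.
apply/eqP; apply: contraR hne => hne.
by rewrite (cancel_lin e1 e2 hne).
Qed.

Lemma bad_card : 4 * #|bad| <= 2 ^ L.
Proof.
have inj : {in setX [set: bool * bool] bad &, injective (fun p => flip p.1 p.2)}.
  move=> [b r] [b' r'] /setXP[_ hr] /setXP[_ hr'] /= ef.
  have hn : forall i, nth false (flip b r) i = nth false (flip b' r') i by rewrite ef.
  have out : forall i, i != 2 * u0 -> i != (2 * u0).+1 -> nth false r i = nth false r' i.
    move=> i h1 h2; move: (hn i); rewrite !nth_flip (negbTE h1) (negbTE h2) /=.
    by rewrite !addbF.
  have hk := key hr hr' out.
  move: hk; rewrite /Hf => hk.
  have e0 : nth false r (2 * u0) = nth false r' (2 * u0).
    by move: hk; case: (nth false r (2 * u0)); case: (nth false r' (2 * u0));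
       case: (nth false r (2 * u0).+1); case: (nth false r' (2 * u0).+1).
  have e1 : nth false r (2 * u0).+1 = nth false r' (2 * u0).+1.
    by move: hk; rewrite e0; case: (nth false r (2 * u0).+1); case: (nth false r' (2 * u0).+1); lia.
  have err : r = r'.
    apply: val_inj; apply: (@eq_from_nth _ false); first by rewrite !size_tuple.
    move=> i _; case: (eqVneq i (2 * u0)) => [->|h1] //.
    case: (eqVneq i (2 * u0).+1) => [->|h2] //; exact: out.
  subst r'.
  have := hn (2 * u0); rewrite !nth_flip eqxx.
  have -> : (2 * u0 == (2 * u0).+1) = false by lia.
  rewrite /= !addbF => hb1.
  have := hn (2 * u0).+1; rewrite !nth_flip eqxx.
  have -> : ((2 * u0).+1 == 2 * u0) = false by lia.
  rewrite /= => hb2.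
  clear hn ef; move: b b' hb1 hb2 => [b1 b2] [b1' b2'] /=.
  by case: (nth false r (2 * u0)); case: (nth false r (2 * u0).+1);
     case: b1; case: b2; case: b1'; case: b2'.
have := card_in_imset inj.
rewrite cardsX cardsT card_prod card_bool => <-.
apply: leq_trans (max_card _) _.
by rewrite card_tuple card_bool.
Qed.

End FP.

Lemma tree_sum (V : finType) (R : pred V) (par : V -> V) (S wt : V -> nat) :
  (forall v, S v = wt v + \sum_(u | ~~ R u && (par u == v)) S u) ->
  \sum_(u | R u) S u = \sum_v wt v.
Proof.
move=> h.
have e1 : \sum_v S v = \sum_v wt v + \sum_(u | ~~ R u) S u.
  under eq_bigr do rewrite h.
  rewrite big_split /=; congr (_ + _).
  by rewrite [RHS](partition_big par predT) //.
move: e1; rewrite (bigID R) /=; lia.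
Qed.

Lemma card_split (V : finType) (P : pred V) (f : V -> nat) N :
  (forall v, f v < N) -> #|P| = \sum_(z < N) #|[pred v | P v && (f v == z)]|.
Proof.
move=> hf.
rewrite -sum1_card (partition_big (fun v => Ordinal (hf v)) predT) //=.
apply: eq_bigr => z _; rewrite -sum1_card; apply: eq_bigl => v.
by rewrite /= -val_eqE.
Qed.

Section Chain.
Variables (V : finType) (N : nat) (pi x y : V -> nat).
Let n := #|V|.
Hypotheses (h0 : 0 < n) (hpi : forall v, pi v < n) (hx : forall v, x v < N)
  (hy : forall v, y v < N) (hxy : forall v, (pi v).+1 != n -> x v < y v)
  (hms : forall i z, #|[pred v | (pi v != 0) && (pi v == i) && (x v == z)]| =
                     #|[pred v | ((pi v).+1 != n) && ((pi v).+1 == i) && (y v == z)]|).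

Let lev i := #|[pred v | pi v == i]|.

Lemma lev_succ i : i.+1 < n -> lev i.+1 = lev i.
Proof.
move=> hi; rewrite /lev (card_split _ hx) (card_split _ hy).
apply: eq_bigr => z _.
transitivity #|[pred v | (pi v != 0) && (pi v == i.+1) && (x v == z)]|.
  apply: eq_card => v; rewrite !inE; case: (eqVneq (pi v) i.+1) => [E|E]; rewrite ?E ?eqxx ?(negbTE E) ?andbF //.
transitivity #|[pred v | ((pi v).+1 != n) && ((pi v).+1 == i.+1) && (y v == z)]|; first exact: hms.
apply: eq_card => v; rewrite !inE; rewrite eqSS.
have hn : (i.+1 != n) by apply/eqP => E; move: hi; rewrite E ltnn.
by case: (eqVneq (pi v) i) => [E|E]; rewrite ?E ?eqxx ?(negbTE E) ?andbF ?hn.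
Qed.

Lemma lev_all i : i < n -> lev i = lev 0.
Proof.
elim: i => // i IH hi; rewrite lev_succ // IH //; lia.
Qed.

Lemma lev1 i : i < n -> lev i = 1.
Proof.
move=> hi; rewrite lev_all //.
have : n = \sum_(i < n) lev i.
  have E0 := card_split (predT : pred V) hpi.
  have E1 : #|(predT : pred V)| = n by apply: eq_card.
  rewrite -[n in LHS]E1 E0; apply: eq_bigr => j _; apply: eq_card => v; by rewrite !inE.
move=> E.
have E2 : \sum_(i < n) lev i = \sum_(i < n) lev 0 by apply: eq_bigr => j _; exact: lev_all.
rewrite E2 sum_nat_const card_ord in E.
have : n * 1 = n * lev 0 by rewrite muln1 {1}E mulnC.
by move/eqP; rewrite eqn_mul2l (negbTE (lt0n_neq0 h0)) /= => /eqP <-.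
Qed.

Lemma pi_inj : injective pi.
Proof.
move=> u v E.
have H : #|[pred w | pi w == pi u]| <= 1 by have := lev1 (hpi u); rewrite /lev => ->.
move/card_le1_eqP: H => H.
by apply: H; rewrite inE ?E.
Qed.

Lemma pi_surj i : i < n -> exists v, pi v = i.
Proof.
move=> hi; have : 0 < #|[pred w | pi w == i]| by have := lev1 hi; rewrite /lev => ->.
by case/card_gt0P => v; rewrite inE => /eqP <-; exists v.
Qed.

Lemma succ_ex v : (pi v).+1 != n -> exists w, pi w = (pi v).+1 /\ x w = y v.
Proof.
move=> hv.
have : 0 < #|[pred w | ((pi w).+1 != n) && ((pi w).+1 == (pi v).+1) && (y w == y v)]|.
  by apply/card_gt0P; exists v; rewrite inE hv !eqxx.
rewrite -hms => /card_gt0P [w]; rewrite inE => /andP[/andP[_ /eqP e1] /eqP e2].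
by exists w.
Qed.

Lemma mono_d d : forall u v, pi v = pi u + d.+1 -> x u < x v.
Proof.
elim: d => [|d IH] u v h.
  have hu : (pi u).+1 != n by apply/eqP => E; move: (hpi v); rewrite h addn1 E ltnn.
  have [w [e1 e2]] := succ_ex hu.
  have -> : v = w by apply: pi_inj; rewrite e1 h addn1.
  by rewrite e2; exact: hxy.
have hu : (pi u).+1 != n by apply/eqP => E; move: (hpi v); rewrite h; lia.
have [w [e1 e2]] := succ_ex hu.
apply: ltn_trans (IH w v _); first by rewrite e2; exact: hxy.
by rewrite e1 h; lia.
Qed.

Lemma mono u v : pi u < pi v -> x u < x v.
Proof.
move=> h; apply: (mono_d (d := pi v - (pi u).+1)); lia.
Qed.

Lemma chain_co : corresponding_order N x pi.
Proof.
have xinj : injective x.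
  move=> u v E; apply: pi_inj.
  case: (ltngtP (pi u) (pi v)) => // h; have := mono h; rewrite E ltnn //.
split.
- by split => //; [exact: pi_inj | exact: pi_surj].
- split => //.
  have inj : injective (fun v => Ordinal (hx v)) by move=> u v /(congr1 val) /= /xinj.
  by have := leq_card _ inj; rewrite card_ord.
- move=> u v; split => h.
  + case: (ltngtP (pi v) (pi u)) h => // h' _; first exact: ltnW (mono h').
    by rewrite (pi_inj h').
  + case: (ltngtP (pi v) (pi u)) => // h'.
    by have := mono h'; rewrite ltnNge h.
Qed.

End Chain.
Lemma sum_sub (V : finType) (P Q : pred V) (F : V -> nat) :
  (forall v, P v -> Q v) -> \sum_(v | P v) F v <= \sum_(v | Q v) F v.
Proof.
move=> h; rewrite [X in _ <= X](bigID P) /=.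
rewrite (eq_bigl P); first exact: leq_addr.
by move=> v; case E: (P v); rewrite ?andbT ?andbF ?h.
Qed.

Section Tree.
Variables (V : finType) (e : rel V) (rt : V).
Hypotheses (esym : symmetric e) (hconn : forall v, connect e rt v).

Fixpoint reach k : {set V} :=
  if k is k'.+1 then reach k' :|: [set v | [exists u in reach k', e u v]] else [set rt].

Lemma reach_mono j k : j <= k -> reach j \subset reach k.
Proof.
move/subnK <-; elim: (k - j) => [|d IH] //=.
apply: subset_trans IH _; exact: subsetUl.
Qed.

Lemma reach_path p : forall a j, a \in reach j -> path e a p -> last a p \in reach (j + size p).
Proof.
elim: p => [|b p IH] a j ha /=; first by rewrite addn0.
case/andP => hab hp; rewrite addnS -addSn; apply: IH hp.
by rewrite /= inE; apply/orP; right; rewrite inE; apply/existsP; exists a; rewrite ha.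
Qed.

Lemma reach_ex v : exists k, v \in reach k.
Proof.
have /connectP [p hp ->] := hconn v.
by exists (0 + size p); apply: reach_path => //; rewrite inE.
Qed.

Definition dist v : nat := ex_minn (reach_ex v).

Lemma dist_in v : v \in reach (dist v).
Proof. by rewrite /dist; case: ex_minnP. Qed.

Lemma dist_min v k : v \in reach k -> dist v <= k.
Proof. by rewrite /dist; case: ex_minnP => m _ h /h. Qed.

Lemma dist_rt : dist rt = 0.
Proof. by apply/eqP; rewrite -leqn0; apply: dist_min; rewrite /= inE. Qed.

Lemma dist0 v : dist v = 0 -> v = rt.
Proof. by move=> h; have := dist_in v; rewrite h /= inE => /eqP. Qed.

Definition par v : V := odflt v [pick u | e u v && ((dist u).+1 == dist v)].

Lemma par_spec v : v != rt -> e (par v) v /\ (dist (par v)).+1 = dist v.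
Proof.
move=> hv.
have : exists u, e u v && ((dist u).+1 == dist v).
  case E: (dist v) => [|k]; first by move: hv; rewrite (dist0 E) eqxx.
  have := dist_in v; rewrite E /= inE => /orP [h|].
    by have := dist_min h; rewrite E ltnn.
  rewrite inE => /existsP [u /andP [hu he]].
  exists u; rewrite he /=.
  have h1 := dist_min hu.
  have h2 : k <= dist u.
    rewrite leqNgt; apply/negP => h2.
    have h3 : v \in reach (dist u).+1.
      by rewrite /= inE; apply/orP; right; rewrite inE; apply/existsP; exists u; rewrite he dist_in.
    have h4 := subsetP (reach_mono h2) _ h3.
    by have := dist_min h4; rewrite E; lia.
  apply/eqP; lia.
case=> u hu; rewrite /par; case: pickP => [w /andP [h1 /eqP h2]|/(_ u)]; last by rewrite hu.
by [].
Qed.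

Fixpoint Tf (wt : V -> nat) k v : nat :=
  if k is k'.+1 then wt v + \sum_(u | (u != rt) && (par u == v)) Tf wt k' u else wt v.

Definition M := \max_v dist v.
Definition S wt v := Tf wt M.+1 v.

Lemma dist_le v : dist v <= M.
Proof. exact: leq_bigmax. Qed.

Lemma child_dist u v : (u != rt) && (par u == v) -> dist u = (dist v).+1.
Proof. by case/andP => h /eqP <-; have [_ ->] := par_spec h. Qed.

Lemma stab wt k : forall v, M < dist v + k -> Tf wt k v = Tf wt k.+1 v.
Proof.
elim: k => [|k IH] v h.
  by move: h; rewrite addn0 ltnNge dist_le.
rewrite [LHS]/= [RHS]/=; congr (_ + _); apply: eq_bigr => u hu.
by apply: IH; rewrite (child_dist hu); lia.
Qed.

Lemma S_rec wt v : S wt v = wt v + \sum_(u | (u != rt) && (par u == v)) S wt u.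
Proof.
rewrite /S [LHS]/=; congr (_ + _); apply: eq_bigr => u hu.
by apply: stab; rewrite (child_dist hu); lia.
Qed.

Lemma level_bound wt k : forall d,
  \sum_(v | dist v == d) Tf wt k v <= \sum_(u | d <= dist u) wt u.
Proof.
elim: k => [|k IH] d /=.
  by apply: sum_sub => v /eqP ->.
rewrite big_split /=.
have E : \sum_(v | dist v == d) \sum_(u | (u != rt) && (par u == v)) Tf wt k u =
         \sum_(u | dist u == d.+1) Tf wt k u.
  rewrite [RHS](partition_big par (fun v => dist v == d)); last first.
    move=> u /eqP hu; have hr : u != rt by apply/eqP => E; move: hu; rewrite E dist_rt.
    have [_ h2] := par_spec hr; rewrite -h2 in hu; by case: hu => ->.
  apply: eq_bigr => v /eqP hv; apply: eq_bigl => u.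
  case E1: (par u == v); rewrite ?andbF ?andbT //.
  apply/idP/idP => h1.
    by have := @child_dist u v; rewrite h1 E1 hv => /(_ isT) ->.
  by apply/eqP => E; move: h1; rewrite E dist_rt.
rewrite E [X in _ <= X](bigID (fun u => dist u == d)) /=.
apply: leq_add.
  by apply: sum_sub => v h; rewrite h (eqP h) leqnn.
apply: leq_trans (IH d.+1) _; apply: sum_sub => v h; apply/andP; split; [exact: ltnW | by rewrite neq_ltn h orbT].
Qed.

Lemma S_bound wt v : S wt v <= \sum_u wt u.
Proof.
apply: (@leq_trans (\sum_(w | dist w == dist v) Tf wt M.+1 w)).
  by rewrite /S (bigD1 v) //= leq_addr.
by apply: leq_trans (level_bound _ _ _) _; exact: sum_sub.
Qed.

End Tree.

Definition wd (k N : nat) : nat := (k + 3) * (trunc_log 2 N).+1.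

Definition sendf (k N : nat) (i a b : nat) (r c0 c1 : bits) : bits := take (9 * wd k N) (c0 ++ c1).

Definition F (k N j : nat) (m : bits) : nat := fld (wd k N) m j.

Definition isroot k N (m : bits) : bool := F k N 1 m == 1.

Definition decidef (k N : nat) (i a b : nat) (r c0 c1 : bits) (ms : seq bits) : bool :=
  let m := sendf k N i a b r c0 c1 in
  let n := F k N 4 m in
  let kids := [seq m' <- ms | ~~ isroot k N m' && (F k N 3 m' == F k N 0 m)] in
  let av := if b != 0 then Hf r (b * N + a) else 0 in
  let bv := if b.+1 != n then Hf r (b.+1 * N + F k N 6 m) else 0 in
  [&& size c0 == 7 * wd k N,
      F k N 0 m == i,
      all (fun m' => F k N 2 m' == F k N 2 m) ms,
      all (fun m' => F k N 4 m' == n) ms,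
      (if isroot k N m then [&& F k N 0 m == F k N 2 m, F k N 5 m == n, n <= N & F k N 7 m == F k N 8 m]
       else has (fun m' => F k N 0 m' == F k N 3 m) ms),
      F k N 5 m == 1 + sumn (map (F k N 5) kids),
      F k N 7 m == av + sumn (map (F k N 7) kids),
      F k N 8 m == bv + sumn (map (F k N 8) kids),
      b < n, a < N, F k N 6 m < N &
      (b.+1 != n) ==> (a < F k N 6 m)].

Definition Pk (k : nat) : dMAM_protocol :=
  DMAM (fun N => 2 * (N * N)) (sendf k) (decidef k).

Lemma size_bound_eq k N : size_bound (9 * (k + 3)) N = 9 * wd k N.
Proof. by rewrite /size_bound /wd mulnA. Qed.

Lemma Pk_bounded k : messages_bounded (Pk k) (9 * (k + 3)).
Proof.
move=> N i a b r c0 c1 _ _ _; rewrite size_bound_eq /= /sendf size_take_min.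
exact: geq_minl.
Qed.

Lemma wd_bound k N m : 0 < N -> m <= 3 * N ^ k.+1 -> m < 2 ^ wd k N.
Proof.
move=> hN hm; set t := trunc_log 2 N.
have h1 : N < 2 ^ t.+1 by apply: trunc_log_ltn.
have h2 : N ^ k.+1 < (2 ^ t.+1) ^ k.+1 by rewrite ltn_exp2r.
rewrite -expnM in h2.
apply: (leq_ltn_trans hm).
apply: (@leq_trans (4 * 2 ^ (t.+1 * k.+1))); first by lia.
have -> : 4 * 2 ^ (t.+1 * k.+1) = 2 ^ (2 + t.+1 * k.+1) by rewrite expnD.
rewrite leq_exp2l // /wd; nia.
Qed.

Lemma sumn_ms (V : finType) (P : pred V) T (g : V -> T) (q : pred T) (f : T -> nat) :
  sumn [seq f m | m <- [seq m <- [seq g u | u <- enum V & P u] | q m]] =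
  \sum_(u | P u && q (g u)) f (g u).
Proof.
rewrite filter_map -map_comp sumnE big_map -filter_predI big_filter.
rewrite enumT; apply: eq_bigl => u; by rewrite /= andbC.
Qed.

Lemma all_ms (V : finType) (P : pred V) (T : eqType) (g : V -> T) (q : pred T) :
  all q [seq g u | u <- enum V & P u] = [forall u, P u ==> q (g u)].
Proof.
apply/allP/forallP => [h u|h m /mapP [u]]; last first.
  by rewrite mem_filter => /andP [hp _] ->; have := h u; rewrite hp.
apply/implyP => hp; apply: h; apply/mapP; exists u => //.
by rewrite mem_filter hp mem_enum.
Qed.

Lemma has_ms (V : finType) (P : pred V) (T : eqType) (g : V -> T) (q : pred T) :
  has q [seq g u | u <- enum V & P u] = [exists u, P u && q (g u)].
Proof.
apply/hasP/existsP => [[m /mapP [u]] | [u /andP [hp hq]]].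
  by rewrite mem_filter => /andP [hp _] -> hq; exists u; rewrite hp.
by exists (g u) => //; apply/mapP; exists u => //; rewrite mem_filter hp mem_enum.
Qed.

Section Main.
Variables (k N : nat) (V : finType) (e : rel V) (id x pi : V -> nat).

Definition msg (c0 c1 : V -> bits) (r : bits) v := sendf k N (id v) (x v) (pi v) r (c0 v) (c1 v).

Lemma unpack c0 c1 r v :
  decidef k N (id v) (x v) (pi v) r (c0 v) (c1 v) [seq msg c0 c1 r u | u <- enum V & e v u] ->
  let Fm j u := F k N j (msg c0 c1 r u) in
  let n := Fm 4 v in
  let kid u := e v u && (~~ isroot k N (msg c0 c1 r u) && (Fm 3 u == Fm 0 v)) in
  size (c0 v) = 7 * wd k N /\ Fm 0 v = id v /\
  (forall u, e v u -> Fm 2 u = Fm 2 v) /\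
  (forall u, e v u -> Fm 4 u = n) /\
  (if isroot k N (msg c0 c1 r v) then [/\ Fm 0 v = Fm 2 v, Fm 5 v = n, n <= N & Fm 7 v = Fm 8 v]
   else exists u, e v u /\ Fm 0 u = Fm 3 v) /\
  Fm 5 v = 1 + \sum_(u | kid u) Fm 5 u /\
  Fm 7 v = (if pi v != 0 then Hf r (pi v * N + x v) else 0) + \sum_(u | kid u) Fm 7 u /\
  Fm 8 v = (if (pi v).+1 != n then Hf r ((pi v).+1 * N + Fm 6 v) else 0) + \sum_(u | kid u) Fm 8 u /\
  pi v < n /\ x v < N /\ Fm 6 v < N /\ ((pi v).+1 != n -> x v < Fm 6 v).
Proof.
rewrite /decidef !all_ms has_ms !sumn_ms -/(msg c0 c1 r v).
move=> /and5P [/eqP h1 /eqP h2 /forallP h3 /forallP h4 /and5P [h5 /eqP h6 /eqP h7 /eqP h8 /and4P [h9 h10 h11 /implyP h12]]].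
split; first done.
split; first done.
split; first by move=> u hu; have := h3 u; rewrite hu => /eqP.
split; first by move=> u hu; have := h4 u; rewrite hu => /eqP.
split.
  case: (isroot _ _ _) h5 => [/and4P [/eqP a /eqP b c /eqP d] | /existsP [u /andP [hu /eqP hu']]] //.
  by exists u.
by do 6 (split; first done).
Qed.


Lemma pack c0 c1 r v :
  let Fm j u := F k N j (msg c0 c1 r u) in
  let n := Fm 4 v in
  let kid u := e v u && (~~ isroot k N (msg c0 c1 r u) && (Fm 3 u == Fm 0 v)) in
  size (c0 v) = 7 * wd k N -> Fm 0 v = id v ->
  (forall u, e v u -> Fm 2 u = Fm 2 v) ->
  (forall u, e v u -> Fm 4 u = n) ->
  (if isroot k N (msg c0 c1 r v) then [/\ Fm 0 v = Fm 2 v, Fm 5 v = n, n <= N & Fm 7 v = Fm 8 v]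
   else exists u, e v u /\ Fm 0 u = Fm 3 v) ->
  Fm 5 v = 1 + \sum_(u | kid u) Fm 5 u ->
  Fm 7 v = (if pi v != 0 then Hf r (pi v * N + x v) else 0) + \sum_(u | kid u) Fm 7 u ->
  Fm 8 v = (if (pi v).+1 != n then Hf r ((pi v).+1 * N + Fm 6 v) else 0) + \sum_(u | kid u) Fm 8 u ->
  pi v < n -> x v < N -> Fm 6 v < N -> ((pi v).+1 != n -> x v < Fm 6 v) ->
  decidef k N (id v) (x v) (pi v) r (c0 v) (c1 v) [seq msg c0 c1 r u | u <- enum V & e v u].
Proof.
move=> Fm n kid h1 h2 h3 h4 h5 h6 h7 h8 h9 h10 h11 h12.
rewrite /decidef !all_ms has_ms !sumn_ms -/(msg c0 c1 r v).
apply/and5P; split.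
- by apply/eqP.
- by apply/eqP.
- by apply/forallP => u; apply/implyP => hu; apply/eqP; exact: h3.
- by apply/forallP => u; apply/implyP => hu; apply/eqP; exact: h4.
apply/and5P; split.
- move: h5; case: (isroot _ _ _) => [[a b c d]|[u [hu hu']]].
    by apply/and4P; split => //; apply/eqP.
  by apply/existsP; exists u; rewrite hu /=; apply/eqP.
- by apply/eqP.
- by apply/eqP.
- by apply/eqP.
apply/and4P; split => //.
by apply/implyP.
Qed.

Hypotheses (esym : symmetric e) (hconn : forall u v, connect e u v)
  (idinj : injective id) (hV : 0 < #|V|).

Lemma conn_const (f : V -> nat) : (forall a b, e a b -> f b = f a) -> forall u v, f u = f v.
Proof.
move=> h u v; have /connectP [p hp ->] := hconn u v.
elim: p u hp => [|b p IH] u //= /andP [hab hp].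
by rewrite -(IH b hp) (h u b hab).
Qed.

Lemma c0_field c0 c1 r v j : size (c0 v) = 7 * wd k N -> j < 7 ->
  F k N j (msg c0 c1 r v) = fld (wd k N) (c0 v) j.
Proof.
move=> hs hj; rewrite /F /msg /sendf take_cat hs.
have -> : (9 * wd k N < 7 * wd k N) = false by apply/negbTE; lia.
by rewrite fld_cat // hs leq_mul2r hj orbT.
Qed.

Definition fa (v : V) : option nat := if pi v != 0 then Some (pi v * N + x v) else None.
Definition fbf (y : V -> nat) (v : V) : option nat :=
  if (pi v).+1 != #|V| then Some ((pi v).+1 * N + y v) else None.

Lemma code_eq a b c d : b < N -> d < N -> (a * N + b == c * N + d) = (a == c) && (b == d).
Proof.
move=> hb hd; apply/eqP/andP => [E|[/eqP -> /eqP ->]] //.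
have hN : 0 < N by lia.
have q : forall p q, q < N -> (p * N + q) %/ N = p /\ (p * N + q) %% N = q.
  by move=> p q hq; rewrite divnMDl // divn_small // addn0 modnMDl modn_small.
have [e1 e2] := q a b hb; have [e3 e4] := q c d hd.
by rewrite E e3 e4 in e1 e2; rewrite e1 e2.
Qed.

Definition Gf (c0 : V -> bits) j v := fld (wd k N) (c0 v) j.
Definition kidG (c0 : V -> bits) v u := [&& e v u, ~~ (Gf c0 1 u == 1) & Gf c0 3 u == Gf c0 0 v].

Lemma unpackG c0 c1 r v : (forall u, size (c0 u) = 7 * wd k N) ->
  decidef k N (id v) (x v) (pi v) r (c0 v) (c1 v) [seq msg c0 c1 r u | u <- enum V & e v u] ->
  let G := Gf c0 in
  let Fm j u := F k N j (msg c0 c1 r u) in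
  G 0 v = id v /\
  (forall u, e v u -> G 2 u = G 2 v) /\
  (forall u, e v u -> G 4 u = G 4 v) /\
  (if G 1 v == 1 then [/\ G 0 v = G 2 v, G 5 v = G 4 v, G 4 v <= N & Fm 7 v = Fm 8 v]
   else exists u, e v u /\ G 0 u = G 3 v) /\
  G 5 v = 1 + \sum_(u | kidG c0 v u) G 5 u /\
  Fm 7 v = (if pi v != 0 then Hf r (pi v * N + x v) else 0) + \sum_(u | kidG c0 v u) Fm 7 u /\
  Fm 8 v = (if (pi v).+1 != G 4 v then Hf r ((pi v).+1 * N + G 6 v) else 0) + \sum_(u | kidG c0 v u) Fm 8 u /\
  pi v < G 4 v /\ x v < N /\ G 6 v < N /\ ((pi v).+1 != G 4 v -> x v < G 6 v).
Proof.
move=> hsz /unpack /= [_ [h2 [h3 [h4 [h5 [h6 [h7 [h8 [h9 [h10 [h11 h12]]]]]]]]]]].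
have E : forall u j, j < 7 -> F k N j (msg c0 c1 r u) = Gf c0 j u by move=> u j hj; exact: c0_field.
have EK : forall u, [&& e v u, ~~ isroot k N (msg c0 c1 r u) & F k N 3 (msg c0 c1 r u) == F k N 0 (msg c0 c1 r v)] = kidG c0 v u.
  by move=> u; rewrite /isroot /kidG !E.
rewrite (eq_bigl _ _ EK) (eq_bigr (Gf c0 5) (fun u _ => E u 5 isT)) (E v 5) // in h6.

rewrite (eq_bigl _ _ EK) in h7.
rewrite (eq_bigl _ _ EK) (E v 4) // (E v 6) // in h8.
rewrite (E v 0) // in h2. rewrite (E v 4) // in h9. rewrite (E v 6) // in h11.
rewrite (E v 4) // (E v 6) // in h12.
rewrite /isroot (E v 1) // (E v 0) // (E v 2) // (E v 5) // (E v 4) // in h5.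
split; first done.
split; first by move=> u hu; have := h3 u hu; rewrite (E u 2) // (E v 2).
split; first by move=> u hu; have := h4 u hu; rewrite (E u 4) // (E v 4).
split.
  case: (Gf c0 1 v == 1) h5 => // [[u [hu hu']]]; exists u; split => //.
  by rewrite -(E u 0) // -(E v 3).
by do 6 (split; first done).
Qed.

Lemma soundness c0 (c1 : (2 * (N * N)).-tuple bool -> V -> bits) :
  ~ corresponding_order N x pi ->
  2 * 2 ^ (2 * (N * N)) <= 3 * n_reject (Pk k) N e id x pi c0 c1.
Proof.
move=> hnot.
set L := 2 * (N * N).
set A := [set r : L.-tuple bool | all_accept (Pk k) N e id x pi c0 (val r) (c1 r)].
have hcard := cardsC A; rewrite card_tuple card_bool in hcard.
have hrej : n_reject (Pk k) N e id x pi c0 c1 = #|~: A|.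
  by apply: eq_card => r; rewrite !inE.
suff h4 : 4 * #|A| <= 2 ^ L by rewrite hrej; lia.
case: (set_0Vmem A) => [-> | [r0 hr0]]; first by rewrite cards0.
have acc : forall r, r \in A -> forall v,
    decidef k N (id v) (x v) (pi v) (val r) (c0 v) (c1 r v) [seq msg c0 (c1 r) (val r) u | u <- enum V & e v u].
  by move=> r; rewrite inE => /forallP.
have hsz : forall v, size (c0 v) = 7 * wd k N.
  by move=> v; have [] := unpack (acc r0 hr0 v).
set G := Gf c0.
have U0 := fun v => unpackG hsz (acc r0 hr0 v).
have hID : forall v, G 0 v = id v by move=> v; have [] := U0 v.
have hRHO : forall v u, e v u -> G 2 u = G 2 v by move=> v; have [_ []] := U0 v.
have hNN : forall v u, e v u -> G 4 u = G 4 v by move=> v; have [_ [_ []]] := U0 v.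
have hR : forall v, G 1 v == 1 -> [/\ G 0 v = G 2 v, G 5 v = G 4 v & G 4 v <= N].
  by move=> v hv; have [_ [_ [_ []]]] := U0 v; rewrite hv => -[a b c _].
have hP : forall v, G 1 v != 1 -> exists u, e v u /\ G 0 u = G 3 v.
  by move=> v hv; have [_ [_ [_ []]]] := U0 v; rewrite (negbTE hv).
have hC : forall v, G 5 v = 1 + \sum_(u | kidG c0 v u) G 5 u.
  by move=> v; have [_ [_ [_ [_ []]]]] := U0 v.
have hpi : forall v, pi v < G 4 v by move=> v; have [_ [_ [_ [_ [_ [_ [_ []]]]]]]] := U0 v.
have hx : forall v, x v < N by move=> v; have [_ [_ [_ [_ [_ [_ [_ [_ []]]]]]]]] := U0 v.
have hY : forall v, G 6 v < N by move=> v; have [_ [_ [_ [_ [_ [_ [_ [_ [_ []]]]]]]]]] := U0 v.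
have hxy : forall v, (pi v).+1 != G 4 v -> x v < G 6 v.
  by move=> v; have [_ [_ [_ [_ [_ [_ [_ [_ [_ []]]]]]]]]] := U0 v.
have Rc : forall u v, G 2 u = G 2 v by apply: conn_const => a b; exact: hRHO.
have Nc : forall u v, G 4 u = G 4 v by apply: conn_const => a b; exact: hNN.
pose par' v := odflt v [pick u | e v u && (G 0 u == G 3 v)].
have hpar : forall v, G 1 v != 1 -> e v (par' v) /\ id (par' v) = G 3 v.
  move=> v hv; have [u [hu hu']] := hP v hv.
  rewrite /par'; case: pickP => [w /andP [h1 /eqP h2]|/(_ u)]; first by rewrite -hID.
  by rewrite hu hu' eqxx.
have hkid : forall v u, kidG c0 v u = (G 1 u != 1) && (par' u == v).
  move=> v u; rewrite /kidG -/G.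
  case R1: (G 1 u == 1); first by rewrite andbF.
  have [he hi] := hpar u (negbT R1).
  rewrite /=; apply/andP/eqP => [[hev /eqP heq]|heq].
    by apply: idinj; rewrite hi heq hID.
  split; first by rewrite esym -heq.
  by rewrite -hi heq hID.
have tsum : forall (S wt : V -> nat), (forall v, S v = wt v + \sum_(u | kidG c0 v u) S u) ->
    \sum_(u | G 1 u == 1) S u = \sum_v wt v.
  move=> S wt h; apply: (@tree_sum V _ par') => v; rewrite [LHS]h; congr (_ + _).
  by apply: eq_bigl => u; rewrite hkid.
have T1 := tsum (G 5) (fun _ => 1) hC.
rewrite sum1_card in T1.
have hRu : forall u u', G 1 u == 1 -> G 1 u' == 1 -> u = u'.
  move=> u u' h1 h2; have [a1 _ _] := hR u h1; have [a2 _ _] := hR u' h2.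
  by apply: idinj; rewrite -!hID a1 a2 (Rc u u').
have [rt0 hrt0] : exists rt0, G 1 rt0 == 1.
  case: (pickP (fun u => G 1 u == 1)) => [u hu|h0]; first by exists u.
  by move: T1; rewrite big_pred0 // => E; move: hV; rewrite -E.
have sum_rt : forall S : V -> nat, \sum_(u | G 1 u == 1) S u = S rt0.
  move=> S; rewrite (big_pred1 rt0) // => u /=.
  by apply/idP/eqP => [h|->] //; exact: hRu.
rewrite sum_rt in T1.
have [_ e5 hnN] := hR rt0 hrt0.
have hn : forall v, G 4 v = #|V| by move=> v; rewrite (Nc v rt0) -e5 T1.
rewrite hn in hnN.
pose fb := fbf (G 6).
have inbad : A \subset bad L fa fb.
  apply/subsetP => r hr; have U := fun v => unpackG hsz (acc r hr v).
  pose Fm j u := F k N j (msg c0 (c1 r) (val r) u).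
  have h7 : forall v, Fm 7 v = hv r (fa v) + \sum_(u | kidG c0 v u) Fm 7 u.
    move=> v; have [_ [_ [_ [_ [_ [H _]]]]]] := U v.
    by rewrite /Fm H /fa; case: (pi v != 0).
  have h8 : forall v, Fm 8 v = hv r (fb v) + \sum_(u | kidG c0 v u) Fm 8 u.
    move=> v; have [_ [_ [_ [_ [_ [_ [H _]]]]]]] := U v.
    by rewrite /Fm H /fb /fbf -/G hn; case: ((pi v).+1 != #|V|).
  have s7 := tsum _ _ h7; have s8 := tsum _ _ h8.
  rewrite !sum_rt in s7 s8.
  have [_ [_ [_ [H _]]]] := U rt0.
  move: H; rewrite -/G hrt0 => -[_ _ _ H].
  by rewrite inE -s7 -s8; apply/eqP.
apply: leq_trans (_ : 4 * #|bad L fa fb| <= 2 ^ L).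
  by rewrite leq_mul2l subset_leq_card.
case: (boolP [forall u : 'I_(N * N), #|[pred v | fa v == Some (val u)]| == #|[pred v | fb v == Some (val u)]|]).
  move=> /forallP hall; exfalso; apply: hnot.
  apply: (@chain_co V N pi x (G 6)) => //.
  - by move=> v; rewrite -(hn v).
  - by move=> v; rewrite -(hn v); exact: hxy.
  move=> i z.
  case: (ltnP z N) => hz; last first.
    transitivity 0; [|symmetry]; apply: eq_card0 => v; rewrite !inE; apply/negbTE/negP.
      by move=> /andP [_ /eqP E]; move: (hx v); rewrite E; lia.
    by move=> /andP [_ /eqP E]; move: (hY v); rewrite E; lia.
  case: (ltnP i N) => hi; last first.
    transitivity 0; [|symmetry]; apply: eq_card0 => v; rewrite !inE; apply/negbTE/negP.
      by move=> /andP [/andP [h1 /eqP E] _]; move: (hpi v) h1; rewrite hn; lia.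
    by move=> /andP [/andP [h1 /eqP E] _]; move: (hpi v) h1; rewrite hn; lia.
  have hu : i * N + z < N * N by nia.
  have := hall (Ordinal hu) => /= /eqP E.
  transitivity #|[pred v | fa v == Some (i * N + z)]|.
    apply: eq_card => v; rewrite !inE /fa.
    case: (pi v != 0) => //=. by rewrite (inj_eq (@Some_inj _)) code_eq.
  rewrite E; apply: eq_card => v; rewrite !inE /fb /fbf.
  case: ((pi v).+1 != #|V|) => //=. by rewrite (inj_eq (@Some_inj _)) code_eq.
rewrite negb_forall => /existsP [u0 hu0].
apply: (@bad_card L (val u0)) => //.
by case: u0 hu0 => u hu /= _; rewrite /L; lia.
Qed.

Lemma enc_cat w l1 l2 : enc w (l1 ++ l2) = enc w l1 ++ enc w l2.
Proof. by rewrite /enc map_cat flatten_cat. Qed.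

Lemma Hf_le3 s u : Hf s u <= 3.
Proof. by rewrite /Hf; case: (nth _ _ _); case: (nth _ _ _). Qed.

Lemma hv_le3 s o : hv s o <= 3.
Proof. by case: o => [u|] //=; exact: Hf_le3. Qed.

Lemma expn_mono a b m : a <= b -> a ^ m <= b ^ m.
Proof. by move=> h; elim: m => // m IH; rewrite !expnS leq_mul. Qed.

Lemma completeness : corresponding_order N x pi -> (forall v, 1 <= id v <= #|V| ^ k) ->
  exists (c0 : V -> bits) (c1 : (2 * (N * N)).-tuple bool -> V -> bits),
    prover_bounded (Pk k) (9 * (k + 3)) N c0 c1 /\
    2 * 2 ^ (2 * (N * N)) <= 3 * n_accept (Pk k) N e id x pi c0 c1.
Proof.
move=> [[hpi piinj pisurj] [hnN hxN xinj] hord] hid.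
set n := #|V|.
have hN : 0 < N by apply: leq_trans hV hnN.
have [rt _] : exists rt : V, true by move/card_gt0P: hV => [v _]; exists v.
have hc : forall v, connect e rt v := hconn rt.
pose par0 := par hc.
pose S0 := S hc.
pose lvl i := odflt rt [pick u | pi u == i].
have hlvl : forall i, i < n -> pi (lvl i) = i.
  move=> i hi; have [u hu] := pisurj i hi.
  by rewrite /lvl; case: pickP => [w /eqP //|/(_ u)]; rewrite hu eqxx.
pose yh v := if (pi v).+1 != n then x (lvl (pi v).+1) else 0.
pose fb := fbf yh.
pose aw (r : bits) v := hv r (fa v).
pose bw (r : bits) v := hv r (fb v).
pose w := wd k N.
pose L0 v := [:: id v; nat_of_bool (v == rt); id rt; id (par0 v); n; S0 (fun _ => 1) v; yh v].
pose L1 (r : bits) v := [:: S0 (aw r) v; S0 (bw r) v].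
pose c0 v := enc w (L0 v).
pose c1 (r : (2 * (N * N)).-tuple bool) v := enc w (L1 (val r) v).
exists c0, c1.
have hsz0 : forall v, size (c0 v) = 7 * w by move=> v; rewrite size_enc.
have hsz1 : forall r v, size (c1 r v) = 2 * w by move=> r v; rewrite size_enc.
split.
  split=> [v|r v]; rewrite size_bound_eq ?hsz0 ?hsz1 -/w leq_mul2r orbC //.
have hNk : N <= N ^ k.+1 by rewrite -{1}(expn1 N) leq_pexp2l.
have small : forall m, m <= 3 * N -> m < 2 ^ w.
  by move=> m hm; apply: wd_bound => //; apply: leq_trans hm _; rewrite leq_mul2l hNk orbT.
have hbound : forall r v, all (fun a => a < 2 ^ w) (L0 v ++ L1 r v).
  have hidw : forall u, id u < 2 ^ w.
    move=> u; apply: wd_bound => //; have /andP [_ h] := hid u.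
    apply: leq_trans h _; apply: (@leq_trans (N ^ k.+1)); last by lia.
    apply: (@leq_trans (N ^ k)); first exact: expn_mono.
    by rewrite expnS leq_pmull.
  move=> r v; rewrite /= !hidw !small //.
  - apply: leq_trans (S_bound _ _ _) _; apply: leq_trans (_ : \sum_(u : V) 3 <= _).
      by apply: leq_sum => u _; exact: hv_le3.
    by rewrite sum_nat_const mulnC leq_mul2l hnN orbT.
  - apply: leq_trans (S_bound _ _ _) _; apply: leq_trans (_ : \sum_(u : V) 3 <= _).
      by apply: leq_sum => u _; exact: hv_le3.
    by rewrite sum_nat_const mulnC leq_mul2l hnN orbT.
  - by rewrite /yh; case: ifP => _; [move: (hxN (lvl (pi v).+1)) |]; lia.
  - apply: leq_trans (S_bound _ _ _) _; rewrite sum_nat_const muln1.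
    have E : #|(xpredT : pred V)| = n by apply: eq_card.
    by rewrite E; lia.
  - by lia.
  - by case: (v == rt); lia.
have hF : forall (r : (2 * (N * N)).-tuple bool) u j, j < 9 ->
    F k N j (msg c0 (c1 r) (val r) u) = nth 0 (L0 u ++ L1 (val r) u) j.
  move=> r u j hj; rewrite /F /msg /sendf take_oversize; last by rewrite size_cat hsz0 hsz1 -mulnDl.
  by rewrite /c0 /c1 -enc_cat fld_enc.
have hisroot : forall (r : (2 * (N * N)).-tuple bool) u, isroot k N (msg c0 (c1 r) (val r) u) = (u == rt).
  by move=> r u; rewrite /isroot hF //=; case: (u == rt).
have hkid : forall (r : (2 * (N * N)).-tuple bool) v u,
    e v u && (~~ isroot k N (msg c0 (c1 r) (val r) u) &&
      (F k N 3 (msg c0 (c1 r) (val r) u) == F k N 0 (msg c0 (c1 r) (val r) v))) =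
    (u != rt) && (par0 u == v).
  move=> r v u; rewrite hisroot !hF //= (inj_eq idinj).
  case: (eqVneq u rt) => [_|hu]; first by rewrite /= andbF.
  case: (eqVneq (par0 u) v) => [hp|hp]; last by rewrite /= !andbF.
  have [he _] := par_spec hc hu; rewrite /= !andbT.
  by rewrite -hp; exact: he.
have hroot : forall wt, S0 wt rt = \sum_v wt v.
  move=> wt; have := @tree_sum V (pred1 rt) par0 (S0 wt) wt (fun v => S_rec hc wt v).
  by rewrite big_pred1_eq.
pose sg v := if (pi v).+1 != n then lvl (pi v).+1 else lvl 0.
have hpisg : forall v, pi (sg v) = if (pi v).+1 != n then (pi v).+1 else 0.
  move=> v; rewrite /sg; case: ifP => h; apply: hlvl => //.
  by rewrite ltn_neqAle h hpi.
have sginj : injective sg.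
  move=> u v E; have h1 := hpisg u; have h2 := hpisg v; rewrite E h2 in h1.
  apply: piinj; move: h1 (hpi u) (hpi v); case: ifP; case: ifP; lia.
have hperm : forall r, \sum_v aw r v = \sum_v bw r v.
  move=> r; rewrite (reindex_inj sginj); apply: eq_bigr => v _.
  rewrite /aw /bw /fa /fb /fbf hpisg /yh /sg.
  by case h: ((pi v).+1 != n).
have allacc : forall r, all_accept (Pk k) N e id x pi c0 (val r) (c1 r).
  move=> r; apply/forallP => v; apply: pack.
  - exact: hsz0.
  - by rewrite hF.
  - by move=> u _; rewrite !hF.
  - by move=> u _; rewrite !hF.
  - rewrite hisroot; case: (eqVneq v rt) => [->|hv'].
      rewrite !hF //=; split => //.
      + by rewrite hroot sum_nat_const muln1; apply: eq_card.
      + by rewrite !hroot hperm.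
    exists (par0 v); have [he _] := par_spec hc hv'; split; first by rewrite esym.
    by rewrite !hF.
  - rewrite (eq_bigl _ _ (hkid r v)) (eq_bigr _ (fun u _ => hF r u 5 isT)) hF //=.
    by rewrite /S0 S_rec.
  - rewrite (eq_bigl _ _ (hkid r v)) (eq_bigr _ (fun u _ => hF r u 7 isT)) hF //=.
    by rewrite /S0 S_rec /aw /fa; case: (pi v != 0).
  - rewrite (eq_bigl _ _ (hkid r v)) (eq_bigr _ (fun u _ => hF r u 8 isT)) !hF //=.
    by rewrite /S0 S_rec /bw /fb /fbf /yh; case: ((pi v).+1 != n).
  - by rewrite hF.
  - by [].
  - by rewrite hF //= /yh; case: ifP.
  - rewrite !hF //= /yh => h; rewrite h.
    have hlt : (pi v).+1 < n by move: (hpi v) h; rewrite -/n; lia.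
    have hl := hlvl (pi v).+1 hlt.
    have := hord v (lvl (pi v).+1); rewrite hl.
    case: (leqP (x (lvl (pi v).+1)) (x v)) => // h1 [_ h2].
    by have := h2 isT; rewrite ltnn.
have -> : n_accept (Pk k) N e id x pi c0 c1 = 2 ^ (2 * (N * N)).
  rewrite /n_accept; have -> : [set r | all_accept (Pk k) N e id x pi c0 (val r) (c1 r)] = setT.
    by apply/setP => r; rewrite !inE allacc.
  by rewrite cardsT card_tuple card_bool.
lia.
Qed.

End Main.

Theorem proposition4 :
  forall k : nat, exists c : nat, exists P : dMAM_protocol,
    messages_bounded P c /\
    forall (N : nat) (V : finType) (e : rel V) (id x pi : V -> nat),
      network e id k ->
      (corresponding_order N x pi ->
         exists (c0 : V -> bits) (c1 : (rand_len P N).-tuple bool -> V -> bits),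
           prover_bounded P c N c0 c1 /\
           2 * 2 ^ rand_len P N <= 3 * n_accept P N e id x pi c0 c1) /\
      (~ corresponding_order N x pi ->
         forall (c0 : V -> bits) (c1 : (rand_len P N).-tuple bool -> V -> bits),
           prover_bounded P c N c0 c1 ->
           2 * 2 ^ rand_len P N <= 3 * n_reject P N e id x pi c0 c1).
Proof.
move=> k; exists (9 * (k + 3)), (Pk k); split; first exact: Pk_bounded.
move=> N V e id x pi [[esym irr hV hconn] [idinj hid]]; split.
- by move=> hco; exact: completeness.
- by move=> hnot c0 c1 _; exact: soundness.
Qed.
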